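(* Let $0<\lambda<\frac{5-\sqrt{21}}{2}$ and let $K$ be the attractor of the IFS $f_1(x)=\lambda x$, $f_2(x)=\lambda x+2\lambda$, $f_3(x)=\lambda x+3\lambda-\lambda^2$, $f_4(x)=\lambda x+1-\lambda$. If $x\in K$ has infinitely many codings, then $x$ has uncountably many codings; in particular $U_{\aleph_0}=\emptyset$.
   Context: A coding of $x\in K$ is a sequence $(i_n)\in\{1,2,3,4\}^{\mathbb{N}}$ with $x=\lim_{n\to\infty}f_{i_1}\circ\cdots\circ f_{i_n}(0)$. $U_{\aleph_0}$ denotes the set of $x\in K$ having exactly countably infinitely many codings. *)

(* Defs.v *)
From Stdlib Require Import Reals List.
Open Scope R_scope.

Inductive digit : Set := D1 | D2 | D3 | D4.

Definition fmap (lam : R) (i : digit) (x : R) : R :=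
  match i with
  | D1 => lam * x
  | D2 => lam * x + 2 * lam
  | D3 => lam * x + 3 * lam - lam ^ 2
  | D4 => lam * x + 1 - lam
  end.

(* A sequence (i_n) in {1,2,3,4}^N, with i_1 stored at index 0. *)
Definition seq4 := nat -> digit.

(* comp lam a n x = f_{a 0} o f_{a 1} o ... o f_{a (n-1)} (x) *)
Fixpoint comp (lam : R) (a : seq4) (n : nat) (x : R) : R :=
  match n with
  | O => x
  | S m => fmap lam (a O) (comp lam (fun k => a (S k)) m x)
  end.

Definition is_coding (lam : R) (a : seq4) (x : R) : Prop :=
  Un_cv (fun n => comp lam a n 0) x.

(* The attractor K: the set of points admitting a coding (the image of the
   coding map, which is the attractor of this contracting IFS). *)
Definition attractor (lam : R) (x : R) : Prop := exists a : seq4, is_coding lam a x.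

Definition seq_eq (a b : seq4) : Prop := forall k, a k = b k.

Definition finite_set (P : seq4 -> Prop) : Prop :=
  exists l : list seq4, forall a, P a -> exists b, In b l /\ seq_eq a b.

Definition countable_set (P : seq4 -> Prop) : Prop :=
  exists g : nat -> seq4, forall a, P a -> exists n, seq_eq a (g n).

Definition U_aleph0 (lam : R) (x : R) : Prop :=
  attractor lam x /\ ~ finite_set (fun a => is_coding lam a x)
  /\ countable_set (fun a => is_coding lam a x).

(* Main.v *)
Require Import Defs.
From Stdlib Require Import Reals Lra Lia List ClassicalEpsilon Classical.
Open Scope R_scope.
Local Notation comp := Defs.comp.

Definition cst (lam : R) (d : digit) : R := fmap lam d 0.
Definition S_ (lam : R) (a : seq4) (n : nat) : R := comp lam a n 0.

Lemma comp_S lam a n y : comp lam a (S n) y = fmap lam (a O) (comp lam (fun k => a (S k)) n y).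
Proof. reflexivity. Qed.

Lemma comp_last lam a n y : comp lam a (S n) y = comp lam a n (fmap lam (a n) y).
Proof. revert a; induction n; intros a. reflexivity. rewrite comp_S, IHn. reflexivity. Qed.

Lemma comp_affine lam a n y : comp lam a n y = comp lam a n 0 + lam ^ n * y.
Proof. revert a; induction n; intros a. simpl; ring.
  rewrite !comp_S, IHn. simpl. destruct (a O); simpl; ring. Qed.

Lemma S_last lam a n : S_ lam a (S n) = S_ lam a n + lam ^ n * cst lam (a n).
Proof. unfold S_, cst. rewrite comp_last, comp_affine. reflexivity. Qed.

Fixpoint hseq (F : nat -> nat) (n : nat) : nat :=
  match n with O => F O | S m => F (hseq F m + 2)%nat end.

Definition idx (h : nat -> nat) (k : nat) : option nat :=
  match excluded_middle_informative (exists n, h n = k) with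
  | left H => Some (proj1_sig (constructive_indefinite_description _ H))
  | right _ => None end.

Definition digit_eq_dec' : forall u v : digit, {u = v} + {u <> v}.
Proof. decide equality. Defined.

Definition fstd (g : nat -> seq4) h n := if digit_eq_dec' (g n (h n)) D2 then D3 else D2.
Definition sndd (g : nat -> seq4) h n := match fstd g h n with D3 => D1 | _ => D4 end.
Definition bseq (a0 : seq4) g h (k : nat) : digit :=
  match idx h k with
  | Some n => fstd g h n
  | None => match k with O => a0 O | S k' =>
      match idx h k' with Some n => sndd g h n | None => a0 k end end
  end.

Section L.
Variable lam : R.
Hypothesis hpos : 0 < lam.
Hypothesis hq : lam * lam - 5 * lam + 1 > 0.

Hypothesis hsmall : lam < 1/4.
Lemma lam_small : lam < 1/4.
Proof. exact hsmall. Qed.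

Lemma cst_bounds d : 0 <= cst lam d <= 1 - lam.
Proof. pose proof lam_small. unfold cst; destruct d; simpl; nra. Qed.

Definition ok a x n := S_ lam a n <= x <= S_ lam a n + lam ^ n.
Definition codes a x := forall n, ok a x n.

Lemma step_bounds a n : S_ lam a n <= S_ lam a (S n) /\
  S_ lam a (S n) + lam ^ (S n) <= S_ lam a n + lam ^ n.
Proof. rewrite S_last. pose proof (cst_bounds (a n)).
  pose proof (pow_lt lam n hpos). simpl. nra. Qed.

Lemma ok_down a x n : ok a x (S n) -> ok a x n.
Proof. unfold ok; pose proof (step_bounds a n); lra. Qed.

Lemma ok_le a x m n : ok a x m -> (n <= m)%nat -> ok a x n.
Proof. intros H Hle; induction Hle; auto. apply IHHle, ok_down, H. Qed.

Lemma mono a n k : S_ lam a n <= S_ lam a (n + k) /\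
  S_ lam a (n + k) + lam ^ (n + k) <= S_ lam a n + lam ^ n.
Proof. induction k. rewrite Nat.add_0_r; lra.
  rewrite Nat.add_succ_r. pose proof (step_bounds a (n + k)). lra. Qed.

Lemma coding_codes a x : is_coding lam a x -> codes a x.
Proof.
  intros Hc n. unfold ok. split.
  - destruct (Rle_lt_dec (S_ lam a n) x) as [h|h]; auto. exfalso.
    destruct (Hc (S_ lam a n - x) ltac:(lra)) as [N HN].
    specialize (HN (Nat.max N n) ltac:(lia)). unfold R_dist in HN.
    destruct (mono a n (Nat.max N n - n)) as [m1 _].
    replace (n + (Nat.max N n - n))%nat with (Nat.max N n) in m1 by lia.
    unfold S_ in *. apply Rabs_def2 in HN. lra.
  - destruct (Rle_lt_dec x (S_ lam a n + lam ^ n)) as [h|h]; auto. exfalso.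
    destruct (Hc (x - (S_ lam a n + lam ^ n)) ltac:(lra)) as [N HN].
    specialize (HN (Nat.max N n) ltac:(lia)). unfold R_dist in HN.
    destruct (mono a n (Nat.max N n - n)) as [_ m2].
    replace (n + (Nat.max N n - n))%nat with (Nat.max N n) in m2 by lia.
    pose proof (pow_lt lam (Nat.max N n) hpos).
    unfold S_ in *. apply Rabs_def2 in HN. lra.
Qed.

Lemma codes_coding a x : codes a x -> is_coding lam a x.
Proof.
  intros Hc eps He. pose proof lam_small.
  destruct (pow_lt_1_zero lam ltac:(rewrite Rabs_right; lra) eps He) as [N HN].
  exists N. intros n Hn. specialize (HN n Hn). specialize (Hc n). unfold ok, S_ in *.
  rewrite Rabs_right in HN by (apply Rle_ge, pow_le; lra).
  unfold R_dist. rewrite Rabs_left1 by lra. lra.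
Qed.

Definition block (a : seq4) p := (a p = D2 /\ a (S p) = D4) \/ (a p = D3 /\ a (S p) = D1).

Lemma pure d0 d1 e0 e1 y :
  cst lam d0 <= y <= cst lam d0 + lam ->
  cst lam d0 + lam * cst lam d1 <= y <= cst lam d0 + lam * cst lam d1 + lam * lam ->
  cst lam e0 <= y <= cst lam e0 + lam ->
  cst lam e0 + lam * cst lam e1 <= y <= cst lam e0 + lam * cst lam e1 + lam * lam ->
  d0 <> e0 -> (d0 = D2 /\ d1 = D4) \/ (d0 = D3 /\ d1 = D1).
Proof.
  pose proof lam_small. intros H1 H2 H3 H4 Hne.
  destruct d0, e0; try congruence; unfold cst in *; simpl in *; try (exfalso; nra);
  destruct d1; simpl in *; auto; exfalso; nra.
Qed.

Lemma le_div t u v : 0 < t -> t * u <= t * v -> u <= v.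
Proof. intros; apply (Rmult_le_reg_l t); auto. Qed.

Lemma sync a b x p : codes a x -> codes b x -> S_ lam a p = S_ lam b p -> a p <> b p ->
  block a p /\ S_ lam a (S (S p)) = S_ lam b (S (S p)).
Proof.
  intros Ha Hb Hs Hne.
  pose proof (pow_lt lam p hpos) as Ht.
  set (t := lam ^ p) in *. set (s := S_ lam a p) in *.
  set (y := (x - s) / t).
  assert (Hx : x = s + t * y) by (unfold y; field; lra).
  assert (E1 : forall c, S_ lam c (S p) = S_ lam c p + t * cst lam (c p)) by (intros; apply S_last).
  assert (E2 : forall c, S_ lam c (S (S p)) = S_ lam c p + t * cst lam (c p) + lam * t * cst lam (c (S p)))
    by (intros; rewrite !S_last; unfold t; simpl; ring).
  assert (P1 : lam ^ (S p) = lam * t) by reflexivity.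
  assert (P2 : lam ^ (S (S p)) = lam * (lam * t)) by reflexivity.
  assert (G : forall c, S_ lam c p = s -> codes c x ->
     (cst lam (c p) <= y <= cst lam (c p) + lam) /\
     (cst lam (c p) + lam * cst lam (c (S p)) <= y <= cst lam (c p) + lam * cst lam (c (S p)) + lam * lam)).
  { intros c Hcs Hc. destruct (Hc (S p)) as [h1 h2]. destruct (Hc (S (S p))) as [h3 h4].
    rewrite E1, P1, Hcs in *. rewrite E2, P2, Hcs in *. rewrite Hx in *.
    repeat split; apply (le_div t); auto; nra. }
  destruct (G a eq_refl Ha) as [A1 A2]. destruct (G b (eq_sym Hs) Hb) as [B1 B2].
  pose proof (pure _ _ _ _ _ A1 A2 B1 B2 Hne) as Ba.
  pose proof (pure _ _ _ _ _ B1 B2 A1 A2 (fun e => Hne (eq_sym e))) as Bb.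
  split; [exact Ba|]. rewrite !E2. fold s. rewrite <- Hs. fold s.
  destruct Ba as [[-> ->]|[-> ->]], Bb as [[-> ->]|[-> ->]]; try congruence;
  unfold cst; simpl; ring.
Qed.

Definition digit_eq_dec : forall u v : digit, {u = v} + {u <> v}.
Proof. decide equality. Defined.

Lemma sync_exists a b x N : codes a x -> codes b x ->
  exists q, (N <= q <= S N)%nat /\ S_ lam a q = S_ lam b q.
Proof.
  intros Ha Hb. induction N.
  - exists O. split. lia. reflexivity.
  - destruct IHN as [q [Hq Hs]].
    destruct (Nat.eq_dec q (S N)) as [e|e]. { exists q; split; [lia|auto]. }
    assert (q = N) by lia. subst q.
    destruct (digit_eq_dec (a N) (b N)) as [d|d].
    + exists (S N); split; [lia|]. rewrite !S_last, Hs, d. reflexivity.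
    + exists (S (S N)); split; [lia|]. apply (sync a b x N Ha Hb Hs d).
Qed.

Local Open Scope nat_scope.
Lemma agree_after a b x N : codes a x -> codes b x ->
  (forall p, (N <= p)%nat -> ~ block a p) -> forall k, (S N <= k)%nat -> b k = a k.
Proof.
  intros Ha Hb Hn. destruct (sync_exists a b x N Ha Hb) as [q [Hq Hs]].
  assert (K : forall j, S_ lam a (q + j)%nat = S_ lam b (q + j)%nat /\ b (q + j)%nat = a (q + j)%nat).
  { induction j.
    - rewrite Nat.add_0_r. split; auto.
      destruct (digit_eq_dec (a q) (b q)) as [d|d]; auto.
      exfalso. apply (Hn q). lia. apply (sync a b x q Ha Hb Hs d).
    - destruct IHj as [IS ID]. rewrite Nat.add_succ_r.
      assert (IS' : S_ lam a (S (q + j)%nat) = S_ lam b (S (q + j)%nat)) by (rewrite !S_last, IS, ID; reflexivity).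
      split; auto.
      destruct (digit_eq_dec (a (S (q+j)%nat)) (b (S (q+j)%nat))) as [d|d]; auto.
      exfalso. apply (Hn (S (q+j)%nat)). lia. apply (sync a b x _ Ha Hb IS' d). }
  intros k Hk. replace k with (q + (k - q))%nat by lia. apply K.
Qed.

Local Open Scope R_scope.
Definition upd (s : seq4) (n : nat) (d : digit) : seq4 := fun k => if Nat.eqb k n then d else s k.

Fixpoint Lst (a : seq4) (n : nat) : list seq4 :=
  match n with
  | O => a :: nil
  | S m => flat_map (fun s => map (fun d => upd s m d) (D1 :: D2 :: D3 :: D4 :: nil)) (Lst a m)
  end.

Lemma Lst_spec a n : forall b, (forall k, (n <= k)%nat -> b k = a k) -> exists c, In c (Lst a n) /\ seq_eq b c.
Proof.
  induction n; intros b Hb.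
  - exists a. split. left; auto. intros k; apply Hb; lia.
  - destruct (IHn (upd b n (a n))) as [c [Hc Hbc]].
    { intros k Hk. unfold upd. destruct (Nat.eqb_spec k n). subst; auto. apply Hb; lia. }
    exists (upd c n (b n)). split.
    + cbn [Lst]. apply in_flat_map. exists c. split; auto.
      apply in_map. destruct (b n); simpl; tauto.
    + intros k. unfold upd. destruct (Nat.eqb_spec k n). subst; auto.
      rewrite <- Hbc. unfold upd. destruct (Nat.eqb_spec k n); congruence.
Qed.

Lemma finite_from a0 x N : codes a0 x -> (forall p, (N <= p)%nat -> ~ block a0 p) ->
  finite_set (fun b => is_coding lam b x).
Proof.
  intros Ha Hn. exists (Lst a0 (S N)). intros b Hb.
  apply Lst_spec. intros k Hk. apply (agree_after a0 b x N Ha (coding_codes b x Hb) Hn k Hk).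
Qed.

Lemma agree_range a b p q : S_ lam b p = S_ lam a p -> (p <= q)%nat ->
  (forall k, (p <= k < q)%nat -> b k = a k) -> S_ lam b q = S_ lam a q.
Proof.
  intros Hs Hle. induction Hle; intros Hk; auto.
  rewrite !S_last. rewrite IHHle by (intros; apply Hk; lia). rewrite Hk by lia. reflexivity.
Qed.

Lemma block_eq a b p : S_ lam b p = S_ lam a p -> block a p -> block b p ->
  S_ lam b (S (S p)) = S_ lam a (S (S p)).
Proof.
  intros Hs Ba Bb. rewrite !S_last, Hs.
  destruct Ba as [[-> ->]|[-> ->]], Bb as [[-> ->]|[-> ->]]; unfold cst; simpl; ring.
Qed.

Lemma uncount a0 x : codes a0 x -> (forall N, exists p, (N <= p)%nat /\ block a0 p) ->
  forall g : nat -> seq4, exists b, is_coding lam b x /\ forall n, ~ seq_eq b (g n).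
Proof.
  intros Ha HN g.
  pose (F := fun N => proj1_sig (constructive_indefinite_description _ (HN N))).
  assert (FS : forall N, (N <= F N)%nat /\ block a0 (F N))
    by (intros N; exact (proj2_sig (constructive_indefinite_description _ (HN N)))).
  pose (h := hseq F).
  assert (hS : forall m, (h m + 2 <= h (S m))%nat) by (intros m; apply (FS (h m + 2)%nat)).
  assert (hB : forall m, block a0 (h m)) by (intros [|m]; apply FS).
  assert (hM : forall j j', (j < j')%nat -> (h j + 2 <= h j')%nat).
  { intros j j' Hj. induction Hj. apply hS. specialize (hS m). lia. }
  assert (hge : forall n, (n <= h n)%nat).
  { induction n. lia. specialize (hS n). lia. }
  assert (hinj : forall j j', h j = h j' -> j = j').
  { intros j j' E. destruct (Nat.lt_trichotomy j j') as [l|[l|l]]; auto;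
    apply hM in l; lia. }
  assert (idx_h : forall n, idx h (h n) = Some n).
  { intros n. unfold idx. destruct (excluded_middle_informative _) as [e|e].
    - f_equal. apply hinj. exact (proj2_sig (constructive_indefinite_description _ e)).
    - exfalso; apply e; eauto. }
  assert (idx_none : forall k, (forall n, h n <> k) -> idx h k = None).
  { intros k Hk. unfold idx. destruct (excluded_middle_informative _) as [e|e]; auto.
    exfalso. destruct e as [n e]. exact (Hk n e). }
  set (b := bseq a0 g h).
  assert (b1 : forall n, b (h n) = fstd g h n) by (intros n; unfold b, bseq; rewrite idx_h; reflexivity).
  assert (b2 : forall n, b (S (h n)) = sndd g h n).
  { intros n; unfold b, bseq. rewrite idx_none, idx_h. reflexivity.
    intros m E. destruct (Nat.lt_trichotomy m n) as [l|[l|l]]; [apply hM in l|subst|apply hM in l]; lia. }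
  assert (b3 : forall k, (forall m, h m <> k) -> (forall m, S (h m) <> k) -> b k = a0 k).
  { intros k H1 H2. unfold b, bseq. rewrite (idx_none k H1). destruct k as [|k]; auto.
    rewrite idx_none; auto. intros m E; apply (H2 m); congruence. }
  assert (bB : forall n, block b (h n)).
  { intros n. unfold block. rewrite b1, b2. unfold sndd, fstd.
    destruct (digit_eq_dec' (g n (h n)) D2); auto. }
  assert (Sync : forall m, S_ lam b (h m) = S_ lam a0 (h m)).
  { induction m.
    - apply (agree_range a0 b O); [reflexivity|lia|].
      intros k Hk. apply b3; intros j E.
      + destruct j. lia. specialize (hM O (S j) ltac:(lia)). lia.
      + destruct j. lia. specialize (hM O (S j) ltac:(lia)). lia.
    - apply (agree_range a0 b (S (S (h m)))).
      + apply block_eq; auto.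
      + specialize (hS m); lia.
      + intros k Hk. specialize (hS m). apply b3; intros j E;
        (destruct (Nat.lt_trichotomy j m) as [l|[l|l]];
        [apply hM in l; lia|subst; lia|
         destruct (Nat.eq_dec j (S m)); [subst; lia| specialize (hM (S m) j ltac:(lia)); lia]]). }
  exists b. split.
  - apply codes_coding. intros n. apply (ok_le _ _ (h n)); auto.
    unfold ok. rewrite Sync. apply Ha.
  - intros n E. specialize (E (h n)). rewrite b1 in E. unfold fstd in E.
    destruct (digit_eq_dec' (g n (h n)) D2); rewrite <- E in *; congruence.
Qed.

End L.

Theorem lemma2p32 (lam : R) (hpos : 0 < lam) (hlt : lam < (5 - sqrt 21) / 2) :
  (forall x : R, attractor lam x ->
     ~ finite_set (fun a => is_coding lam a x) ->
     ~ countable_set (fun a => is_coding lam a x))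
  /\ (forall x : R, ~ U_aleph0 lam x).
Proof.
  pose proof (sqrt_sqrt 21 ltac:(lra)). pose proof (sqrt_pos 21).
  assert (hq : lam * lam - 5 * lam + 1 > 0) by nra.
  assert (hsmall : lam < 1/4) by nra.
  assert (P1 : forall x : R, attractor lam x ->
     ~ finite_set (fun a => is_coding lam a x) ->
     ~ countable_set (fun a => is_coding lam a x)).
  { intros x [a0 Ha] Hnf Hc.
    pose proof (coding_codes lam hpos hq hsmall a0 x Ha) as Hco.
    destruct (classic (forall N, exists p, (N <= p)%nat /\ block a0 p)) as [HB|HB].
    - destruct Hc as [g Hg].
      destruct (uncount lam hpos hq hsmall a0 x Hco HB g) as [b [Hb Hn]].
      destruct (Hg b Hb) as [n E]. exact (Hn n E).
    - apply not_all_ex_not in HB. destruct HB as [N HN].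
      apply Hnf. apply (finite_from lam hpos hq hsmall a0 x N Hco).
      intros p Hp Hbl. apply HN. exists p; auto. }
  split; auto.
  intros x [Ha [Hf Hc]]. exact (P1 x Ha Hf Hc).
Qed.
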